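(* Let $n$ be a nonnegative integer and let $q$, $a$, $z$ be indeterminates (equivalently, generic complex numbers such that no denominator below vanishes). Then \[ \frac{(q^{z-n+\frac{3}{2}};q)_n\,(aq^{z-\frac{1}{2}};q)_n} {(q^{z-2n+2};q)_n\,(aq^{z+n-1};q)_n} =\sum_{k=0}^n \frac{(q^{-n};q)_k\,(q^{-n+\frac{1}{2}};q)_k\,(q^{\frac{5}{2}-2n}/a;q)_k} {(q;q)_k\,(q^{z-2n+2};q)_k\,(q^{2-2n-z}/a;q)_k}\,q^k . \]
   Context: For a variable $u$ and a nonnegative integer $n$, the $q$-shifted factorial is $(u;q)_0=1$ and $(u;q)_n=(1-u)(1-uq)\cdots(1-uq^{n-1})$. Powers such as $q^{z}$ and $q^{1/2}$ are understood formally (i.e., $q^{z}$ and $q^{1/2}$ are treated as variables). *)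

(* Defs.v *)
From mathcomp Require Import all_boot all_order all_algebra.
Set Implicit Arguments. Unset Strict Implicit. Unset Printing Implicit Defensive.
Import GRing.Theory Num.Theory.
Local Open Scope ring_scope.

Definition qpoch (F : ringType) (u q : F) (n : nat) : F :=
  \prod_(i < n) (1 - u * q ^+ i).

(* Main.v *)
Require Import Defs.
From mathcomp Require Import all_boot all_order all_algebra.
From mathcomp Require Import ring.
Import GRing.Theory Num.Theory.
Local Open Scope ring_scope.

Section S.
Variable F : fieldType.
Implicit Types (q u a b c : F).

Lemma qpS u q n : qpoch u q n.+1 = qpoch u q n * (1 - u * q ^+ n).
Proof. by rewrite /qpoch big_ord_recr. Qed.

Lemma qp_add u q m p : qpoch u q (m + p) = qpoch u q m * qpoch (u * q ^+ m) q p.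
Proof.
elim: p => [|p IH]; first by rewrite addn0 /qpoch big_ord0 mulr1.
by rewrite addnS !qpS IH exprD; ring.
Qed.

Lemma qp_pre u q m n : (m <= n)%N -> qpoch u q n != 0 -> qpoch u q m != 0.
Proof.
move=> /subnKC <-; rewrite qp_add mulf_eq0 negb_or => /andP[] //.
Qed.

Lemma qp_fac u q m n : (m < n)%N -> qpoch u q n != 0 -> 1 - u * q ^+ m != 0.
Proof.
move=> mn h; move: (qp_pre u q _ _ mn h); rewrite qpS mulf_eq0 negb_or => /andP[] //.
Qed.

Definition T q a b c n k := qpoch q q n / (qpoch q q k * qpoch q q (n - k))
  * qpoch a q k * qpoch b q k * (qpoch (a*b*c) q n / qpoch (a*b*c) q k)
  * qpoch c q (n - k) * c ^+ k.
Definition H q a b c n k := qpoch q q n * (1 - q ^+ k) / (qpoch q q k * qpoch q q (n.+1 - k))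
  * qpoch a q k * qpoch b q k * (qpoch (a*b*c) q n / qpoch (a*b*c) q k)
  * qpoch c q (n.+1 - k) * c ^+ k * (a*b*c*q^+n - q^+(n.+1 - k)).

Lemma key q a b c k j :
  qpoch q q k != 0 -> qpoch q q j != 0 -> 1 - q * q^+j != 0 -> 1 - q * q^+k != 0 ->
  qpoch (a*b*c) q k != 0 -> 1 - a*b*c*q^+k != 0 ->
  T q a b c (k+j).+1 k = (1 - a*c*q^+(k+j))*(1-b*c*q^+(k+j)) * T q a b c (k+j) k
    + (H q a b c (k+j) k.+1 - H q a b c (k+j) k).
Proof.
move=> h1 h2 h3 h4 h5 h6.
have e1 : ((k+j).+1 - k = j.+1)%N by rewrite -addnS addKn.
rewrite /T /H e1 subSS addKn.
rewrite !qpS !exprS !exprD.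
field; by rewrite h1 h2 h3 h4 h5 h6.
Qed.

Lemma tel (f : nat -> F) m : \sum_(i < m) (f i.+1 - f i) = f m - f 0%N.
Proof.
elim: m => [|m IH]; first by rewrite big_ord0 subrr.
rewrite big_ord_recr /= IH; ring.
Qed.

Lemma qp0 u q : qpoch u q 0 = 1.
Proof. by rewrite /qpoch big_ord0. Qed.

Lemma saal q a b c n : qpoch q q n != 0 -> qpoch (a*b*c) q n != 0 ->
  \sum_(k < n.+1) T q a b c n k = qpoch (a*c) q n * qpoch (b*c) q n.
Proof.
elim: n => [|n IH] hq hC.
  by rewrite big_ord1 /T subnn !qp0 expr0 !(mulr1, divr1, mul1r) invr1.
have hqn := qp_pre q q n n.+1 (leqnSn n) hq.
have hCn := qp_pre (a*b*c) q n n.+1 (leqnSn n) hC.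
rewrite big_ord_recr /=.
rewrite (eq_bigr (fun i : 'I_n.+1 => (1 - a*c*q^+n)*(1-b*c*q^+n) * T q a b c n i
    + (H q a b c n i.+1 - H q a b c n i))); last first.
  move=> [i hi] _ /=.
  have hin : (i <= n)%N by [].
  have l1 : (n - i <= n.+1)%N by rewrite (leq_trans (leq_subr _ _)).
  have l2 : (n - i < n.+1)%N by rewrite ltnS leq_subr.
  have := key q a b c i (n - i) (qp_pre q q i n.+1 (ltnW hi) hq) (qp_pre q q (n - i) n.+1 l1 hq)
    (qp_fac q q (n - i) n.+1 l2 hq) (qp_fac q q i n.+1 hi hq)
    (qp_pre (a*b*c) q i n.+1 (ltnW hi) hC) (qp_fac (a*b*c) q i n.+1 hi hC).
  by rewrite subnKC.
rewrite big_split /= -mulr_sumr IH // tel.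
have H0 : H q a b c n 0 = 0 by rewrite /H expr0 subrr mulr0 !mul0r.
have HT : H q a b c n n.+1 + T q a b c n.+1 n.+1 = 0.
  rewrite /H /T !subnn !qp0 expr0 !qpS exprS.
  field.
  rewrite hqn hCn (qp_fac q q n n.+1 (ltnSn n) hq).
  by rewrite (qp_fac (a*b*c) q n n.+1 (ltnSn n) hC).
rewrite H0 subr0 -addrA HT addr0 !qpS; ring.
Qed.

Lemma scale_eq (x y z u v : F) : x = y -> u = x * z -> v = y * z -> u = v.
Proof. by move=> -> -> ->. Qed.

Lemma Pk q c k j : q != 0 -> c != 0 ->
  qpoch ((q^+(k+j))^-1) q k * q^+k * qpoch c q (k+j) * qpoch q q j
  = qpoch q q (k+j) * qpoch c q j * c^+k * qpoch (q / q^+(k+j) / c) q k.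
Proof.
move=> q0 c0; elim: k j => [|k IH] j.
  by rewrite !add0n !qp0 !expr0 !(mulr1, mul1r) mulrC.
have := IH j.+1; rewrite addSnnS; set N := (k + j.+1)%N => E.
have eN : q^+N = q^+k * (q * q^+j) by rewrite /N exprD exprS.
have qk : q^+k != 0 by rewrite expf_neq0.
have qj : q^+j != 0 by rewrite expf_neq0.
rewrite !qpS !exprS in E *; rewrite eN in E *.
apply: (@scale_eq _ _ (- (q^+j)^-1) _ _ E); field. all: by rewrite ?q0 ?c0 ?qk ?qj.
Qed.

Lemma app q a b c n : q != 0 -> c != 0 -> qpoch q q n != 0 ->
  qpoch (a*b*c) q n != 0 -> qpoch c q n != 0 -> qpoch (q / q^+n / c) q n != 0 ->
  qpoch (b*c) q n * qpoch (a*c) q n / (qpoch (a*b*c) q n * qpoch c q n)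
  = \sum_(k < n.+1) qpoch ((q^+n)^-1) q k * qpoch a q k * qpoch b q k
     / (qpoch q q k * qpoch (a*b*c) q k * qpoch (q/q^+n/c) q k) * q^+k.
Proof.
move=> q0 c0 hq hC hc hD.
rewrite [X in X / _]mulrC -saal // mulr_suml; apply: eq_bigr => [[k hk]] _ /=.
have hkn : (k <= n)%N by [].
have hnk : (n - k <= n)%N by rewrite leq_subr.
have := Pk q c k (n - k) q0 c0; rewrite subnKC // => E.
have qk : q^+k != 0 by rewrite expf_neq0.
have h1 := qp_pre _ _ _ _ hkn hq.
have h2 := qp_pre _ _ _ _ hnk hq.
have h3 := qp_pre _ _ _ _ hkn hC.
have h4 := qp_pre _ _ _ _ hkn hD.
apply: (@scale_eq _ _ (qpoch a q k * qpoch b q k / (qpoch q q k * qpoch (a*b*c) q k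
   * qpoch (q/q^+n/c) q k * qpoch c q n * qpoch q q (n - k))) _ _ (esym E)).
  rewrite /T; field.
  by rewrite hC hc h1 h2 h3 h4.
move: (qpoch (q^-n) q k) (qpoch a q k) (qpoch b q k) => X Y Z.
field.
by rewrite ?qk ?hc ?h1 ?h2 ?h3 ?h4.
Qed.
End S.

Theorem mainTheorem3 (F : fieldType) (n : nat) (s w a : F)
  (hs : s != 0) (hw : w != 0) (ha : a != 0)
  (hq : qpoch (s ^+ 2) (s ^+ 2) n != 0)
  (hd1 : qpoch (w * s ^ (4%:Z - 4%:Z * n%:Z)) (s ^+ 2) n != 0)
  (hd2 : qpoch (a * w * s ^ (2%:Z * n%:Z - 2%:Z)) (s ^+ 2) n != 0)
  (hd3 : qpoch (s ^ (4%:Z - 4%:Z * n%:Z) / a / w) (s ^+ 2) n != 0) :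
  qpoch (w * s ^ (3%:Z - 2%:Z * n%:Z)) (s ^+ 2) n
    * qpoch (a * w * s ^ (- 1%:Z)) (s ^+ 2) n
    / (qpoch (w * s ^ (4%:Z - 4%:Z * n%:Z)) (s ^+ 2) n
       * qpoch (a * w * s ^ (2%:Z * n%:Z - 2%:Z)) (s ^+ 2) n)
  = \sum_(k < n.+1)
      qpoch (s ^ (- (2%:Z * n%:Z))) (s ^+ 2) k
      * qpoch (s ^ (1%:Z - 2%:Z * n%:Z)) (s ^+ 2) k
      * qpoch (s ^ (5%:Z - 4%:Z * n%:Z) / a) (s ^+ 2) k
      / (qpoch (s ^+ 2) (s ^+ 2) k
         * qpoch (w * s ^ (4%:Z - 4%:Z * n%:Z)) (s ^+ 2) k
         * qpoch (s ^ (4%:Z - 4%:Z * n%:Z) / a / w) (s ^+ 2) k)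
      * (s ^+ 2) ^+ k.
Proof.
set q := s ^+ 2.
set A := s ^ (1%:Z - 2%:Z * n%:Z).
set B := s ^ (5%:Z - 4%:Z * n%:Z) / a.
set c := a * w * s ^ (2%:Z * n%:Z - 2%:Z).
have sc : s ^ (2%:Z * n%:Z - 2%:Z) != 0 by rewrite expfz_neq0.
have c0 : c != 0 by rewrite /c !mulf_neq0.
have q0 : q != 0 by rewrite /q expf_neq0.
have e4 : s ^ (- (2%:Z * n%:Z)) = (q ^+ n)^-1.
  by rewrite -invr_expz -PoszM /q -exprM.
have e1 : w * s ^ (4%:Z - 4%:Z * n%:Z) = A * B * c.
  have -> : s ^ (4%:Z - 4%:Z * n%:Z) = A * s ^ (5%:Z - 4%:Z * n%:Z) * s ^ (2%:Z * n%:Z - 2%:Z).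
    rewrite /A -!expfzDr //; congr (_ ^ _); ring.
  rewrite /B /c; field; by rewrite ?ha ?hw ?hs ?sc ?c0 ?q0.
have e2 : a * w * s ^ (- 1%:Z) = A * c.
  have -> : s ^ (- 1%:Z) = A * s ^ (2%:Z * n%:Z - 2%:Z).
    rewrite /A -!expfzDr //; congr (_ ^ _); ring.
  rewrite /c; ring.
have e3 : w * s ^ (3%:Z - 2%:Z * n%:Z) = B * c.
  have -> : s ^ (3%:Z - 2%:Z * n%:Z) = s ^ (5%:Z - 4%:Z * n%:Z) * s ^ (2%:Z * n%:Z - 2%:Z).
    rewrite -!expfzDr //; congr (_ ^ _); ring.
  rewrite /B /c; field; by rewrite ?ha ?hw ?hs ?sc ?c0 ?q0.
have e5 : s ^ (4%:Z - 4%:Z * n%:Z) / a / w = q / q ^+ n / c.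
  have -> : s ^ (4%:Z - 4%:Z * n%:Z) = s ^ 2%:Z * s ^ (- (2%:Z * n%:Z)) * (s ^ (2%:Z * n%:Z - 2%:Z))^-1.
    rewrite invr_expz -!expfzDr //; congr (_ ^ _); ring.
  rewrite e4 /c /q; field; by rewrite ?ha ?hw ?hs ?sc ?c0 ?q0 ?expf_neq0.
rewrite e5 in hd3 *; rewrite e1 in hd1 *; rewrite e2 e3 e4.
exact: app.
Qed.
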